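(* Let $M$ be a finite $\Sigma$-Rickart right $R$-module and $P$ a simple right $R$-module with $\mathrm{Hom}_R(M,P)=0$. Then $M^{(\ell)}\oplus P^{(n)}$ is a finite $\Sigma$-Rickart module for all integers $\ell,n>0$.
   Context: $M^{(n)}$ is the direct sum of $n$ copies of $M$. $M$ is Rickart if $\ker\varphi$ is a direct summand of $M$ for all $\varphi\in\mathrm{End}_R(M)$; $M$ is finite $\Sigma$-Rickart if $M^{(n)}$ is Rickart for all $n>0$. *)

(* Defs.v *)
From HB Require Import structures.
From mathcomp Require Import all_boot all_algebra.
Set Implicit Arguments. Unset Strict Implicit. Unset Printing Implicit Defensive.
Import GRing.Theory.
Local Open Scope ring_scope.

(* Right R-modules are modelled as left modules over the converse ring
   R^c = GRing.converse R (so that m *: (a * b) = (m *: a) *: b in the right-module reading). *)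
Notation rmodType R := (lmodType (GRing.converse R)).

Section ModuleNotions.
Variables (K : pzRingType).

Definition submodule (V : lmodType K) (S : V -> Prop) : Prop :=
  [/\ S 0, (forall x y, S x -> S y -> S (x + y)) & (forall (a : K) x, S x -> S (a *: x))].

Definition direct_summand (V : lmodType K) (S : V -> Prop) : Prop :=
  submodule S /\
  exists T : V -> Prop,
    [/\ submodule T,
        (forall x, S x -> T x -> x = 0) &
        (forall x, exists y z, [/\ S y, T z & x = y + z])].

Definition kerp (V W : lmodType K) (f : V -> W) : V -> Prop := fun x => f x = 0.

Definition Rickart (M : lmodType K) : Prop :=
  forall phi : {linear M -> M}, direct_summand (kerp phi).

Definition dsum_pow (M : lmodType K) (n : nat) : lmodType K := {ffun 'I_n -> M}.

Definition fin_Sigma_Rickart (M : lmodType K) : Prop :=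
  forall n : nat, (0 < n)%N -> Rickart (dsum_pow M n).

Definition simple_module (P : lmodType K) : Prop :=
  (exists x : P, x <> 0) /\
  forall S : P -> Prop, submodule S -> (forall x, S x -> x = 0) \/ (forall x, S x).

Definition Hom_zero (M P : lmodType K) : Prop :=
  forall f : {linear M -> P}, forall x, f x = 0.

End ModuleNotions.

(* Main.v *)
Require Import Defs.
From HB Require Import structures.
From mathcomp Require Import all_boot all_algebra.
From Stdlib Require Import Classical.
Set Implicit Arguments. Unset Strict Implicit. Unset Printing Implicit Defensive.
Import GRing.Theory.
Local Open Scope ring_scope.

Section Gen.
Variable K : pzRingType.

Definition lin (U V : lmodType K) (f : U -> V) :=
  forall a x y, f (a *: x + y) = a *: f x + f y.

Definition mklin (U V : lmodType K) (f : U -> V) (H : lin f) : {linear U -> V} :=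
  HB.pack f (GRing.isLinear.Build _ _ _ _ f H).

Lemma mklinE (U V : lmodType K) (f : U -> V) (H : lin f) x : mklin H x = f x.
Proof. by []. Qed.

Lemma lin_lin (U V : lmodType K) (f : {linear U -> V}) : lin f.
Proof. by move=> a x y; rewrite linearP. Qed.

Section L.
Variables (U V : lmodType K) (f : U -> V) (H : lin f).
Lemma lin0 : f 0 = 0.
Proof. by have := H 1 0 0; rewrite scaler0 add0r scale1r => /eqP; rewrite -subr_eq subrr eq_sym => /eqP. Qed.
Lemma linD x y : f (x + y) = f x + f y.
Proof. by have := H 1 x y; rewrite !scale1r. Qed.
Lemma linZ a x : f (a *: x) = a *: f x.
Proof. by have := H a x 0; rewrite !addr0 lin0 addr0. Qed.
Lemma linN x : f (- x) = - f x.
Proof. by have := linZ (-1) x; rewrite !scaleN1r. Qed.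
Lemma linB x y : f (x - y) = f x - f y.
Proof. by rewrite linD linN. Qed.
End L.

End Gen.

Section Key.
Variable K : pzRingType.

Definition Rick' (U : lmodType K) := forall f : U -> U, lin f -> direct_summand (kerp f).
Definition semisimple (V : lmodType K) := forall S : V -> Prop, submodule S ->
  exists T, [/\ submodule T, (forall x, S x -> T x -> x = 0) &
        (forall x, exists y z, [/\ S y, T z & x = y + z])].
Definition homz (U V : lmodType K) := forall g : U -> V, lin g -> forall x, g x = 0.

Lemma Rick_Rick' (U : lmodType K) : Rickart U -> Rick' U.
Proof. by move=> H f Hf; exact: (H (mklin Hf)). Qed.

Lemma Rick'_Rick (U : lmodType K) : Rick' U -> Rickart U.
Proof. by move=> H f; apply: H; apply: lin_lin. Qed.

Lemma ker_sub (U V : lmodType K) (f : U -> V) : lin f -> submodule (kerp f).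
Proof.
move=> Hf; rewrite /kerp; split; first exact: lin0.
  by move=> x y hx hy; rewrite (linD Hf) hx hy addr0.
by move=> a x hx; rewrite (linZ Hf) hx scaler0.
Qed.

Lemma lin_comp (U V W : lmodType K) (f : V -> W) (g : U -> V) :
  lin f -> lin g -> lin (f \o g).
Proof. by move=> Hf Hg a x y /=; rewrite Hg Hf. Qed.

Variables (U V W : lmodType K) (iU : U -> W) (pU : W -> U) (iV : V -> W) (pV : W -> V).
Hypotheses (HiU : lin iU) (HpU : lin pU) (HiV : lin iV) (HpV : lin pV).
Hypotheses (e1 : cancel iU pU) (e2 : cancel iV pV) (e3 : forall v, pU (iV v) = 0)
  (e4 : forall u, pV (iU u) = 0) (e5 : forall w, iU (pU w) + iV (pV w) = w).

Lemma key : Rick' U -> semisimple V -> homz U V -> Rick' W.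
Proof.
move=> RU SV HZ phi Hphi; split; first exact: ker_sub.
pose al := pU \o phi \o iU. pose be := pU \o phi \o iV. pose de := pV \o phi \o iV.
have Hal : lin al by do 2 apply: lin_comp.
have Hbe : lin be by do 2 apply: lin_comp.
have Hde : lin de by do 2 apply: lin_comp.
have Hga : forall u, pV (phi (iU u)) = 0.
  by move=> u; apply: (HZ (pV \o phi \o iU)); do 2 apply: lin_comp.
have phiE : forall w, phi w = iU (al (pU w) + be (pV w)) + iV (de (pV w)).
  move=> w; rewrite -{1}(e5 w) (linD Hphi) -{1}(e5 (phi (iU (pU w)))) Hga (lin0 HiV) addr0.
  rewrite -{1}(e5 (phi (iV (pV w)))) addrA -(linD HiU) //.
have kerE : forall w, phi w = 0 <-> al (pU w) + be (pV w) = 0 /\ de (pV w) = 0.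
  move=> w; rewrite phiE; split.
    move=> h; split.
      by have := congr1 pU h; rewrite (linD HpU) e1 e3 addr0 (lin0 HpU).
    by have := congr1 pV h; rewrite (linD HpV) e2 e4 add0r (lin0 HpV).
  by case=> -> ->; rewrite (lin0 HiU) (lin0 HiV) addr0.
have [[C0 CD CZ] [C [[Cs0 CsD CsZ] C1 C2]]] := RU al Hal.
pose Q v := de v = 0 /\ exists u, al u + be v = 0.
have Qs : submodule Q.
  split.
  - by split; [exact: lin0|exists 0; rewrite (lin0 Hal) (lin0 Hbe) addr0].
  - move=> x y [hx [ux hux]] [hy [uy huy]]; split; first by rewrite (linD Hde) hx hy addr0.
    by exists (ux + uy); rewrite (linD Hal) (linD Hbe) addrACA hux huy addr0.
  - move=> a x [hx [ux hux]]; split; first by rewrite (linZ Hde) hx scaler0.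
    by exists (a *: ux); rewrite (linZ Hal) (linZ Hbe) -scalerDr hux scaler0.
have [Q' [[Q'0 Q'D Q'Z] Q1 Q2]] := SV Q Qs.
exists (fun w => C (pU w) /\ Q' (pV w)); split.
- split.
  + by rewrite (lin0 HpU) (lin0 HpV).
  + by move=> x y [? ?] [? ?]; rewrite (linD HpU) (linD HpV); split; auto.
  + by move=> a x [? ?]; rewrite (linZ HpU) (linZ HpV); split; auto.
- move=> w /kerE [h1 h2] [hc hq].
  have q0 : pV w = 0 by apply: Q1 => //; split => //; exists (pU w).
  have u0 : pU w = 0.
    by apply: C1 => //; rewrite /kerp; move: h1; rewrite q0 (lin0 Hbe) addr0.
  by rewrite -(e5 w) u0 q0 (lin0 HiU) (lin0 HiV) addr0.
- move=> w.
  have [q [q' [[hq0 [u hu]] hq' eq]]] := Q2 (pV w).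
  have [k [c [hk hc eu]]] := C2 u; rewrite eu in hu.
  have [k2 [c2 [hk2 hc2 eqw]]] := C2 (pU w).
  exists (iU (c + k2) + iV q), (w - (iU (c + k2) + iV q)); split.
  + apply/kerE; rewrite (linD HpU) (linD HpV) e1 e2 e3 e4 addr0 add0r; split => //.
    move: hu; rewrite (linD Hal) (linD Hal) hk hk2 add0r addr0 //.
  + rewrite (linB HpU) (linB HpV) (linD HpU) (linD HpV) e1 e2 e3 e4 addr0 add0r.
    split.
      have -> : pU w - (c + k2) = c2 + (- c) by rewrite eqw [k2 + c2]addrC opprD addrACA (subrr k2) addr0.
      by apply: CsD => //; rewrite -scaleN1r; apply: CsZ.
    by rewrite eq addrAC subrr add0r.
  + by rewrite addrC subrK.
Qed.
End Key.

Section Iso.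
Variable K : pzRingType.
Variables (X Y : lmodType K) (F : X -> Y) (G : Y -> X).
Hypotheses (HF : lin F) (HG : lin G) (FK : cancel F G) (GK : cancel G F).

Lemma sub_pull (S : Y -> Prop) : submodule S -> submodule (fun x => S (F x)).
Proof.
case=> S0 SD SZ; split; first by rewrite (lin0 HF).
  by move=> x y hx hy; rewrite (linD HF); auto.
by move=> a x hx; rewrite (linZ HF); auto.
Qed.

Lemma sub_pullG (S : X -> Prop) : submodule S -> submodule (fun y => S (G y)).
Proof.
case=> S0 SD SZ; split; first by rewrite (lin0 HG).
  by move=> x y hx hy; rewrite (linD HG); auto.
by move=> a x hx; rewrite (linZ HG); auto.
Qed.

Lemma semisimple_iso : semisimple Y -> semisimple X.
Proof.
move=> SY S HS.
have [T [HT T1 T2]] := SY _ (sub_pullG HS).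
exists (fun x => T (F x)); split.
- exact: sub_pull.
- by move=> x hs ht; rewrite -(FK x) (T1 (F x)) ?(lin0 HG) ?FK.
- move=> x; have [y [z [hy hz e]]] := T2 (F x).
  exists (G y), (G z); split => //; first by rewrite GK.
  by rewrite -(linD HG) -e FK.
Qed.

Lemma Rick_iso : Rick' Y -> Rick' X.
Proof.
move=> RY f Hf; split; first exact: ker_sub.
have Hf' : lin (F \o f \o G) by do 2 apply: lin_comp.
have [_ [T [HT T1 T2]]] := RY _ Hf'.
have kE : forall x, f x = 0 <-> (F \o f \o G) (F x) = 0.
  move=> x /=; rewrite FK; split; first by move=> ->; rewrite (lin0 HF).
  by move=> h; rewrite -(FK (f x)) h (lin0 HG).
exists (fun x => T (F x)); split.
- exact: sub_pull.
- by move=> x /kE hs ht; rewrite -(FK x) (T1 (F x)) ?(lin0 HG).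
- move=> x; have [y [z [hy hz e]]] := T2 (F x).
  exists (G y), (G z); split => //.
  + by apply/kE; rewrite GK.
  + by rewrite GK.
  by rewrite -(linD HG) -e FK.
Qed.
End Iso.

Section Homz.
Variable K : pzRingType.

Definition single (I : finType) (X : lmodType K) (i : I) (x : X) : {ffun I -> X} :=
  [ffun j => if j == i then x else 0].

Lemma single_lin (I : finType) (X : lmodType K) (i : I) : lin (@single I X i).
Proof.
move=> a x y; apply/ffunP => j; rewrite !ffunE.
by case: (j == i); rewrite ?scaler0 ?addr0.
Qed.

Lemma sum_single (I : finType) (X : lmodType K) (x : {ffun I -> X}) :
  x = \sum_i single i (x i).
Proof.
apply/ffunP => j; rewrite sum_ffunE (bigD1 j) //= ffunE eqxx big1 ?addr0 //.
by move=> i /negbTE hi; rewrite ffunE eq_sym hi.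
Qed.

Lemma lin_sum (X Y : lmodType K) (f : X -> Y) (Hf : lin f) (I : finType) (F : I -> X) :
  f (\sum_i F i) = \sum_i f (F i).
Proof. by rewrite -[f]/(mklin Hf : X -> Y) linear_sum. Qed.

Lemma homz_dom (I : finType) (X Y : lmodType K) : homz X Y -> homz {ffun I -> X} Y.
Proof.
move=> H g Hg x; rewrite (sum_single x) lin_sum // big1 // => i _.
exact: (H (g \o @single I X i) (lin_comp Hg (@single_lin I X i))).
Qed.

Lemma homz_cod (I : finType) (X Y : lmodType K) : homz X Y -> homz X {ffun I -> Y}.
Proof.
move=> H g Hg x; apply/ffunP => i; rewrite ffunE.
apply: (H (fun x => g x i)) => a y z; by rewrite Hg !ffunE.
Qed.
End Homz.

Section SS.
Variable K : pzRingType.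
Variables (I : finType) (P : lmodType K).
Hypothesis SP : simple_module P.

Definition span (J : {set I}) (x : {ffun I -> P}) := forall i, i \notin J -> x i = 0.

Lemma span_sub J : submodule (span J).
Proof.
split; first by move=> i _; rewrite ffunE.
  by move=> x y hx hy i hi; rewrite ffunE hx // hy // addr0.
by move=> a x hx i hi; rewrite ffunE hx // scaler0.
Qed.

Lemma semisimple_ffun : semisimple {ffun I -> P}.
Proof.
move=> Q [Q0 QD QZ].
pose Good J := forall x, Q x -> span J x -> x = 0.
have maxJ : exists J, Good J /\ forall i, i \notin J -> ~ Good (i |: J).
  suff: forall m J, (#|~: J| <= m)%N -> Good J ->
      exists J, Good J /\ forall i, i \notin J -> ~ Good (i |: J).
    move=> h; apply: (h #|~: (set0 : {set I})| set0) => // x _ hx.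
    by apply/ffunP => i; rewrite ffunE hx // in_set0.
  elim=> [|m IH] J hm hJ.
    exists J; split => // i hi; exfalso.
    move: hm; rewrite leqn0 cards_eq0 => /eqP hc.
    have : i \in ~: J by rewrite in_setC hi.
    by rewrite hc in_set0.
  have [[i [hi hg]]|hno] := classic (exists i, i \notin J /\ Good (i |: J)).
    apply: (IH (i |: J)) => //.
    have : (#|~: (i |: J)| < #|~: J|)%N.
      by apply: proper_card; rewrite setCU; apply/properP; split;
        [exact: subsetIr | exists i; rewrite ?in_setC // in_setI !in_setC in_set1 eqxx].
    by move=> h; rewrite -ltnS; apply: leq_trans h hm.
  exists J; split => // i hi hg; apply: hno; exists i; split => //.
have [J [gJ mJ]] := maxJ.
exists (span J); split; first exact: span_sub.
  by move=> x hq hs; apply: gJ.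
pose Rs x := exists y z, [/\ Q y, span J z & x = y + z].
have [S0 SD SZ] := span_sub J.
have RD : forall x y, Rs x -> Rs y -> Rs (x + y).
  move=> x y [y1 [z1 [h1 h2 ->]]] [y2 [z2 [h3 h4 ->]]].
  by exists (y1 + y2), (z1 + z2); split; auto; rewrite addrACA.
have RZ : forall a x, Rs x -> Rs (a *: x).
  move=> a x [y1 [z1 [h1 h2 ->]]]; exists (a *: y1), (a *: z1); split; auto.
  by rewrite scalerDr.
have R0 : Rs 0 by exists 0, 0; split; rewrite ?addr0.
have Rsing : forall i p, Rs (single i p).
  move=> i p; have [iJ|iJ] := boolP (i \in J).
    exists 0, (single i p); split; rewrite ?add0r //.
    by move=> j hj; rewrite ffunE; case: eqP => // ej; rewrite ej iJ in hj.
  have ng := mJ i iJ.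
  have [x [hqx hsx hx0]] : exists x, [/\ Q x, span (i |: J) x & x <> 0].
    apply: NNPP => hn; apply: ng => x hq hs; apply: NNPP => hx.
    by apply: hn; exists x.
  pose S p := Rs (single i p).
  have Ss : submodule S.
    split.
    - by rewrite /S (lin0 (single_lin (X:=P) i)).
    - by move=> a b ha hb; rewrite /S (linD (single_lin (X:=P) i)); auto.
    - by move=> a b ha; rewrite /S (linZ (single_lin (X:=P) i)); auto.
  have Sx : S (x i).
    exists x, (- (x - single i (x i))); split => //.
      move=> j hj; rewrite !ffunE; case: eqP => [->|nji]; first by rewrite subrr oppr0.
      by rewrite hsx ?subr0 ?oppr0 // in_setU1 negb_or hj andbT; apply/eqP.
    by rewrite opprB addrC subrK.
  have [hz|hall] := SP.2 S Ss; last exact: hall.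
  exfalso; apply: hx0; apply: gJ => // j hj.
  have [->|nji] := eqVneq j i; first exact: hz.
  by apply: hsx; rewrite in_setU1 negb_or nji.
move=> x; rewrite (sum_single x).
by apply: (big_ind Rs) => // i _.
Qed.
End SS.

Section Fin.
Variable K : pzRingType.

Section Nest.
Variables (T1 T2 : finType) (X : lmodType K).
Let F (x : {ffun T1 -> {ffun T2 -> X}}) : {ffun (T1 * T2) -> X} := [ffun p => x p.1 p.2].
Let G (y : {ffun (T1 * T2) -> X}) : {ffun T1 -> {ffun T2 -> X}} := [ffun i => [ffun j => y (i, j)]].
Let HF : lin F. Proof. by move=> a x y; apply/ffunP => p; rewrite !ffunE. Qed.
Let HG : lin G. Proof. by move=> a x y; apply/ffunP => i; apply/ffunP => j; rewrite !ffunE. Qed.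
Let FK : cancel F G. Proof. by move=> x; apply/ffunP => i; apply/ffunP => j; rewrite !ffunE. Qed.
Let GK : cancel G F. Proof. by move=> y; apply/ffunP => -[i j]; rewrite !ffunE. Qed.

Lemma Rick_nest : Rick' {ffun (T1 * T2) -> X} -> Rick' {ffun T1 -> {ffun T2 -> X}}.
Proof. move=> H; exact: (Rick_iso HF HG FK GK H). Qed.

Lemma ss_nest : semisimple {ffun (T1 * T2) -> X} -> semisimple {ffun T1 -> {ffun T2 -> X}}.
Proof. move=> H; exact: (semisimple_iso HF HG FK GK H). Qed.
End Nest.

Section Reidx.
Variables (T1 T2 : finType) (X : lmodType K) (h : T1 -> T2) (h' : T2 -> T1).
Hypotheses (hK : cancel h h') (h'K : cancel h' h).
Let F (x : {ffun T1 -> X}) : {ffun T2 -> X} := [ffun t => x (h' t)].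
Let G (y : {ffun T2 -> X}) : {ffun T1 -> X} := [ffun t => y (h t)].
Let HF : lin F. Proof. by move=> a x y; apply/ffunP => p; rewrite !ffunE. Qed.
Let HG : lin G. Proof. by move=> a x y; apply/ffunP => p; rewrite !ffunE. Qed.
Let FK : cancel F G. Proof. by move=> x; apply/ffunP => i; rewrite !ffunE hK. Qed.
Let GK : cancel G F. Proof. by move=> y; apply/ffunP => i; rewrite !ffunE h'K. Qed.
Lemma Rick_reidx : Rick' {ffun T2 -> X} -> Rick' {ffun T1 -> X}.
Proof. move=> H; exact: (Rick_iso HF HG FK GK H). Qed.
End Reidx.

Lemma Rick_pow (X : lmodType K) (k l : nat) :
  Rickart (dsum_pow X (k * l)) -> Rick' {ffun 'I_k -> {ffun 'I_l -> X}}.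
Proof.
move=> H; apply: Rick_nest.
have E : #|{: 'I_k * 'I_l}| = (k * l)%N by rewrite card_prod !card_ord.
have hK : cancel (fun t => cast_ord E (enum_rank t)) (fun i => enum_val (cast_ord (esym E) i)).
  by move=> t; rewrite cast_ordK enum_rankK.
have h'K : cancel (fun i => enum_val (cast_ord (esym E) i)) (fun t => cast_ord E (enum_rank t)).
  by move=> i; rewrite enum_valK cast_ordKV.
exact: (Rick_reidx hK h'K (Rick_Rick' H)).
Qed.
End Fin.
Unset Implicit Arguments.

Theorem mainTheorem18 (R : pzRingType) (M P : rmodType R) :
  fin_Sigma_Rickart M -> simple_module P -> Hom_zero M P ->
  forall l n : nat, (0 < l)%N -> (0 < n)%N ->
    fin_Sigma_Rickart ((dsum_pow M l * dsum_pow P n)%type : lmodType (GRing.converse R)).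
Proof.
move=> HM SP HZ l n l0 n0 k k0.
set A := dsum_pow M l. set B := dsum_pow P n.
pose U := {ffun 'I_k -> A}. pose V := {ffun 'I_k -> B}.
pose W := {ffun 'I_k -> (A * B)%type}.
pose iU (u : U) : W := [ffun i => (u i, 0)].
pose pU (w : W) : U := [ffun i => (w i).1].
pose iV (v : V) : W := [ffun i => (0, v i)].
pose pV (w : W) : V := [ffun i => (w i).2].
have HiU : lin iU by move=> a x y; apply/ffunP => i; rewrite !ffunE; apply: injective_projections => /=; rewrite ?ffunE ?scaler0 ?addr0.
have HpU : lin pU by move=> a x y; apply/ffunP => i; rewrite !ffunE.
have HiV : lin iV by move=> a x y; apply/ffunP => i; rewrite !ffunE; apply: injective_projections => /=; rewrite ?ffunE ?scaler0 ?addr0.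
have HpV : lin pV by move=> a x y; apply/ffunP => i; rewrite !ffunE.
have e1 : cancel iU pU by move=> u; apply/ffunP => i; rewrite !ffunE.
have e2 : cancel iV pV by move=> u; apply/ffunP => i; rewrite !ffunE.
have e3 : forall v, pU (iV v) = 0 by move=> v; apply/ffunP => i; rewrite !ffunE.
have e4 : forall v, pV (iU v) = 0 by move=> v; apply/ffunP => i; rewrite !ffunE.
have e5 : forall w, iU (pU w) + iV (pV w) = w.
  by move=> w; apply/ffunP => i; rewrite !ffunE; apply: injective_projections => /=; rewrite ?ffunE ?addr0 ?add0r.
apply: Rick'_Rick.
apply: (key HiU HpU HiV HpV e1 e2 e3 e4 e5).
- apply: Rick_pow; apply: HM; by rewrite muln_gt0 k0 l0.
- apply: ss_nest; exact: semisimple_ffun.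
- apply: homz_cod; apply: homz_cod; apply: homz_dom; apply: homz_dom.
  by move=> g Hg x; apply: (HZ (mklin Hg)).
Qed.
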